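(* Let $f:\mathbb{R}^n\to\mathbb{R}$ be differentiable and strongly convex, and let $x^*$ be its unique minimizer. Let $(x^k)$ be the sequence generated by the Method of Ellipcenters (ME) described in the context, started from an arbitrary point. If the method does not stop, then $\lim_{k\to+\infty}x^k=x^*$.
   Context: $\langle\cdot,\cdot\rangle$ and $\|\cdot\|$ denote the Euclidean inner product and norm. A function $f:\mathbb{R}^n\to\mathbb{R}$ is strongly convex with constant $\mu>0$ if $f(tx+(1-t)y)\le tf(x)+(1-t)f(y)-\frac{\mu t(1-t)}{2}\|y-x\|^2$ for all $x,y\in\mathbb{R}^n$, $t\in[0,1]$. Method of Ellipcenters (ME): given an initial point $x^0$, at iteration $k$: (1) if $\nabla f(x^k)=0$, stop. (2) Otherwise let $t_k>0$ be the (unique) positive number with $f(x^k-t_k\nabla f(x^k))=f(x^k)$ and set $y^k=x^k-t_k\nabla f(x^k)$. (3) If $\nabla f(x^k)$ and $\nabla f(y^k)$ are linearly dependent, set $x^{k+1}=\frac12(x^k+y^k)$. Otherwise compute $\cos\theta_k=\frac{\langle x^k-y^k,-\nabla f(y^k)\rangle}{\|x^k-y^k\|\,\|\nabla f(y^k)\|}$, $\sin\theta_k=\sqrt{1-\cos^2\theta_k}$, $w^k=-\nabla f(y^k)+\frac{\langle x^k-y^k,\nabla f(y^k)\rangle}{\|x^k-y^k\|^2}(x^k-y^k)$, $d^k=\frac{w^k}{\|w^k\|}-\frac{\sin\theta_k}{2\cos\theta_k}\frac{x^k-y^k}{\|x^k-y^k\|}$, and let $x^{k+1}$ be a minimizer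 of $f$ over the semiline $\{\frac12(x^k+y^k)+v d^k: v\ge 0\}$ (this semiline is the set of centers of ellipses in the plane $x^k+\mathrm{span}\{\nabla f(x^k),\nabla f(y^k)\}$ passing through $x^k$ and $y^k$ and orthogonal to $\nabla f(x^k)$ at $x^k$ and to $\nabla f(y^k)$ at $y^k$). *)

(* Defs.v *)
From HB Require Import structures.
From mathcomp Require Import all_boot all_order all_algebra.
From mathcomp Require Import all_classical all_reals all_analysis.
Set Implicit Arguments. Unset Strict Implicit. Unset Printing Implicit Defensive.
Import Order.TTheory GRing.Theory Num.Theory.
Import numFieldNormedType.Exports.
Local Open Scope ring_scope.

Section ME.
Variables (R : realType) (n : nat).
Implicit Types (u v x y : 'rV[R]_n) (f : 'rV[R]_n -> R).

Definition dotp u v : R := \sum_(i < n) u 0 i * v 0 i.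
Definition enorm u : R := Num.sqrt (dotp u u).

Definition strongly_convex f (mu : R) : Prop :=
  forall x y (t : R), 0 <= t <= 1 ->
    f (t *: x + (1 - t) *: y) <= t * f x + (1 - t) * f y
                                 - mu * t * (1 - t) / 2 * enorm (y - x) ^+ 2.

Definition grad f x : 'rV[R]_n := \row_(i < n) ('d f x (delta_mx 0 i : 'rV[R]_n)).

Definition lin_dep u v : Prop :=
  exists a b : R, (a != 0 \/ b != 0) /\ a *: u + b *: v = 0.

(* One iteration of the Method of Ellipcenters from xk producing xk1
   (assuming grad f xk <> 0, i.e. the method does not stop). *)
Definition ME_step f x x' : Prop :=
  exists t : R, 0 < t /\ f (x - t *: grad f x) = f x /\
  let y := x - t *: grad f x in
  let m := 2^-1 *: (x + y) in
  (lin_dep (grad f x) (grad f y) -> x' = m) /\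
  (~ lin_dep (grad f x) (grad f y) ->
     let gy := grad f y in
     let cos := dotp (x - y) (- gy) / (enorm (x - y) * enorm gy) in
     let sin := Num.sqrt (1 - cos ^+ 2) in
     let w := - gy + (dotp (x - y) gy / enorm (x - y) ^+ 2) *: (x - y) in
     let d := (enorm w)^-1 *: w - (sin / (2 * cos) / enorm (x - y)) *: (x - y) in
     exists v : R, 0 <= v /\ x' = m + v *: d /\
       forall u : R, 0 <= u -> f x' <= f (m + u *: d)).

Definition ME_sequence f (xs : nat -> 'rV[R]_n) : Prop :=
  forall k, grad f (xs k) != 0 /\ ME_step f (xs k) (xs k.+1).

End ME.

(* Main.v *)
Require Import Defs.
From HB Require Import structures.
From mathcomp Require Import all_boot all_order all_algebra.
From mathcomp Require Import all_classical all_reals all_analysis.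
From mathcomp Require Import ring lra.
Import Order.TTheory GRing.Theory Num.Theory.
Import numFieldNormedType.Exports.
Local Open Scope classical_set_scope.
Local Open Scope ring_scope.

Section H.
Variables (R : realType) (n : nat).
Implicit Types (u v w x y : 'rV[R]_n) (f : 'rV[R]_n -> R).

Lemma diff_rem f x : differentiable f x -> forall e : R, 0 < e ->
  exists2 r : R, 0 < r & forall h, `|h| < r ->
    `|f (x + h) - f x - 'd f x h| <= e * `|h|.
Proof.
move=> /diff_locally; rewrite funeqE => hf e e0.
set k := 'o _ in hf.
have /(littleoP [littleo of k]) /nbhs_ballP[r r0 Hr] := e0.
exists r => // h hr.
rewrite [x + h]addrC; have := hf h; rewrite /= => ->.
have -> : f x + 'd f x h + k h - f x - 'd f x h = k h by ring.
apply: Hr; by rewrite -ball_normE /= sub0r normrN.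
Qed.

Lemma dotpC u v : dotp u v = dotp v u.
Proof. by apply: eq_bigr => i _; rewrite mulrC. Qed.
Lemma dotpDl u v w : dotp (u + v) w = dotp u w + dotp v w.
Proof. by rewrite /dotp -big_split; apply: eq_bigr => i _; rewrite mxE mulrDl. Qed.
Lemma dotpZl (a : R) u w : dotp (a *: u) w = a * dotp u w.
Proof. by rewrite /dotp mulr_sumr; apply: eq_bigr => i _; rewrite mxE mulrA. Qed.
Lemma dotpNl u w : dotp (- u) w = - dotp u w.
Proof. by rewrite -scaleN1r dotpZl mulN1r. Qed.
Lemma dotpBl u v w : dotp (u - v) w = dotp u w - dotp v w.
Proof. by rewrite dotpDl dotpNl. Qed.
Lemma dotpDr u v w : dotp w (u + v) = dotp w u + dotp w v.
Proof. by rewrite dotpC dotpDl !(dotpC w). Qed.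
Lemma dotpZr (a : R) u w : dotp w (a *: u) = a * dotp w u.
Proof. by rewrite dotpC dotpZl dotpC. Qed.
Lemma dotpNr u w : dotp w (- u) = - dotp w u.
Proof. by rewrite dotpC dotpNl dotpC. Qed.
Lemma dotpBr u v w : dotp w (u - v) = dotp w u - dotp w v.
Proof. by rewrite dotpDr dotpNr. Qed.
Lemma dotp_ge0 u : 0 <= dotp u u.
Proof. by apply: sumr_ge0 => i _; rewrite -expr2 sqr_ge0. Qed.
Lemma enorm_sqr u : enorm u ^+ 2 = dotp u u.
Proof. by rewrite /enorm sqr_sqrtr // dotp_ge0. Qed.
Lemma enorm_ge0 u : 0 <= enorm u.
Proof. exact: sqrtr_ge0. Qed.

Lemma normv_sqr_le v : `|v| ^+ 2 <= dotp v v.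
Proof.
have [v0|] := eqVneq (mx_norm v) 0.
  have -> : `|v| = 0 by exact: v0.
  rewrite expr0n /=; exact: dotp_ge0.
move=> /mx_norm_neq0 [[i j] e]; have -> : `|v| = `|v i j| by exact: e.
rewrite (ord1 i) real_normK ?num_real // expr2 /dotp.
rewrite (bigD1 j) //= lerDl; apply: sumr_ge0 => k _; by rewrite -expr2 sqr_ge0.
Qed.

Lemma normv_le v : `|v| <= enorm v.
Proof.
rewrite /enorm -[leLHS](ger0_norm (normr_ge0 v)) -sqrtr_sqr ler_sqrt ?dotp_ge0 //.
exact: normv_sqr_le.
Qed.

Lemma d_dotp f x v : differentiable f x -> 'd f x v = dotp (grad f x) v.
Proof.
move=> _; rewrite {1}(row_sum_delta v) linear_sum /dotp.
by apply: eq_bigr => i _; rewrite linearZ /= mxE mulrC.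
Qed.

Lemma sc_convex f mu : 0 <= mu -> strongly_convex f mu ->
  forall x y (t : R), 0 <= t <= 1 -> f (t *: x + (1 - t) *: y) <= t * f x + (1 - t) * f y.
Proof.
move=> mu0 sc x y t /andP[t0 t1]; apply: (le_trans (sc x y t _)); first by rewrite t0 t1.
rewrite lerBlDr lerDl; apply: mulr_ge0; last exact: sqr_ge0.
apply: mulr_ge0; last by rewrite invr_ge0.
by apply: mulr_ge0; [apply: mulr_ge0|rewrite subr_ge0].
Qed.

Lemma grad_ineq f mu x v : differentiable f x -> 0 <= mu -> strongly_convex f mu ->
  dotp (grad f x) v <= f (x + v) - f x.
Proof.
move=> df mu0 sc; rewrite -(d_dotp f x v df).
apply/ler_addgt0Pr => e e0.
set a := `|v|.
have a0 : 0 <= a by exact: normr_ge0.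
have q0 : 0 < e / (a + 1) by rewrite divr_gt0 // ltr_wpDl.
have [r r0 Hr] := diff_rem _ _ df _ q0.
set q := e / (a + 1) in q0 Hr.
have qa : q * a <= e.
  rewrite /q mulrAC ler_pdivrMr ?ltr_wpDl //; nra.
set t := r / (2 * (r + a)).
have ra0 : 0 < r + a by lra.
have t0 : 0 < t by rewrite divr_gt0 // mulr_gt0.
have tE : t * (2 * (r + a)) = r by rewrite /t mulfVK // gt_eqF // mulr_gt0.
have t1 : t <= 1 by nra.
have ta : t * a < r by nra.
have := Hr (t *: v); rewrite normrZ gtr0_norm // -/a => /(_ ta).
rewrite linearZ /= => H1.
change (t *: 'd f x v) with (t * 'd f x v) in H1.
have t01 : 0 <= t <= 1 by rewrite (ltW t0) t1.
have H2 := sc_convex _ _ mu0 sc (x + v) x t t01.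
have E : t *: (x + v) + (1 - t) *: x = x + t *: v.
  by rewrite scalerDr scalerBl scale1r addrC addrA subrK.
rewrite E in H2.
move: H1; rewrite ler_norml => /andP[H1 _].
set D := 'd f x v in H1 *.
set F1 := f (x + v) in H2 *.
set F2 := f (x + t *: v) in H1 H2.
have H3 : t * D - q * (t * a) <= t * (F1 - f x) by lra.
have H4 : t * (q * a) <= t * e by rewrite ler_pM2l.
nra.
Qed.

Lemma half_id : (1 - 2^-1 : R) = 2^-1.
Proof. by field. Qed.

Lemma step_decr f mu x x' : 0 <= mu -> strongly_convex f mu -> ME_step f x x' ->
  exists t : R, 0 < t /\ f (x - t *: grad f x) = f x /\
    f x' <= f x - mu / 8 * (t ^+ 2 * dotp (grad f x) (grad f x)).
Proof.
move=> mu0 sc [t [t0 [fy [Hdep Hndep]]]].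
exists t; split => //; split => //.
set g := grad f x in fy Hdep Hndep *.
set y := x - t *: g in fy Hdep Hndep *.
have Hm : f x' <= f (2^-1 *: (x + y)).
  have [ld|nld] := pselect (lin_dep (grad f x) (grad f y)).
    by rewrite (Hdep ld).
  have := Hndep nld; rewrite /=.
  move=> [v [v0 [-> Hu]]].
  have := Hu 0 (lexx 0); rewrite scale0r addr0 => H; exact: H.
apply: (le_trans Hm).
have h01 : 0 <= (2^-1 : R) <= 1.
  by rewrite invr_ge0 ler0n /= invf_le1 ?ler1n // ltr0n.
have := sc x y 2^-1 h01.
rewrite half_id -scalerDr fy enorm_sqr.
have -> : y - x = - (t *: g) by rewrite /y addrAC subrr add0r.
rewrite dotpNl dotpNr opprK dotpZl dotpZr => H; apply: (le_trans H).
have -> : 2^-1 * f x + 2^-1 * f x = f x by field.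
set D := dotp g g.
have -> : mu / 2 / 2 / 2 * (t * (t * D)) = mu / 8 * (t ^+ 2 * D) by field.
exact: lexx.
Qed.

Lemma sc_min f mu xm x : strongly_convex f mu -> (forall z, f xm <= f z) ->
  mu / 4 * dotp (x - xm) (x - xm) <= f x - f xm.
Proof.
move=> sc hmin.
have h01 : 0 <= (2^-1 : R) <= 1.
  by rewrite invr_ge0 ler0n /= invf_le1 ?ler1n // ltr0n.
have := sc x xm 2^-1 h01.
rewrite half_id enorm_sqr -[xm - x]opprB dotpNl dotpNr opprK => H.
have := le_trans (hmin _) H.
set D := dotp _ _ => H2.
have -> : mu / 4 * D = 2 * (mu / 2 / 2 / 2 * D) by field.
lra.
Qed.

Lemma key f mu p x t (e r d c : R) : 0 <= mu -> strongly_convex f mu ->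
  0 < d -> 0 < c -> 0 <= e -> differentiable f x ->
  (forall h, `|h| < r -> `|f (p + h) - f p - 'd f p h| <= e * `|h|) ->
  d + d <= r -> 12 * e <= c -> `|x - p| < d -> 0 < t ->
  f (x - t *: grad f x) = f x -> t * enorm (grad f x) <= d ->
  c <= enorm (grad f x) -> False.
Proof.
move=> mu0 sc d0 c0 e0 dfx Hr dr ec xp t0 fy td cg.
set g := grad f x in fy td cg.
set G := dotp g g.
set gk := enorm g in td cg.
have gk0 : 0 < gk by exact: lt_le_trans c0 cg.
have gkG : gk ^+ 2 = G by rewrite enorm_sqr.
set l := d / gk.
have l0 : 0 < l by rewrite divr_gt0.
have lgk : l * gk = d by rewrite /l mulfVK // gt_eqF.
set v := - (l *: g).
have vv : dotp v v = d ^+ 2.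
  by rewrite /v dotpNl dotpNr opprK dotpZl dotpZr -/G -gkG -lgk; ring.
have nv : `|v| <= d.
  have := normv_sqr_le v; rewrite vv => H.
  have := normr_ge0 v; nra.
have H1 : f x <= f (x + v).
  set s := t / l.
  have s0 : 0 < s by rewrite divr_gt0.
  have sl : s * l = t by rewrite /s mulfVK // gt_eqF.
  have s1 : s <= 1 by rewrite /s ler_pdivrMr // mul1r; nra.
  have s01 : 0 <= s <= 1 by rewrite (ltW s0) s1.
  have := sc_convex _ _ mu0 sc (x + v) x s s01.
  have -> : s *: (x + v) + (1 - s) *: x = x - t *: g.
    by rewrite /v scalerDr scalerBl scale1r scalerN scalerA sl addrC addrA subrK.
  rewrite fy => H; nra.
have H2 : f x + d * gk <= f (x - v).
  have := grad_ineq _ _ _ (- v) dfx mu0 sc.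
  have -> : dotp g (- v) = d * gk.
    by rewrite /v opprK dotpZr -/G -gkG -lgk; ring.
  lra.
set w := x - p.
have xE : x = p + w by rewrite /w addrC subrK.
have nw := normr_ge0 w.
have nwv1 : `|w + v| <= `|w| + `|v| by exact: ler_normD.
have nwv2 : `|w - v| <= `|w| + `|v| by rewrite -(normrN v) ler_normD.
have R1 := Hr (w + v) ltac:(lra).
have R2 := Hr (w - v) ltac:(lra).
have R0 := Hr w ltac:(lra).
rewrite linearD /= in R1; rewrite linearB /= in R2.
rewrite [p + (w + v)]addrA -xE in R1.
rewrite [p + (w - v)]addrA -xE in R2.
rewrite -xE in R0.
move: R1 R2 R0; rewrite !ler_norml => /andP[_ R1] /andP[_ R2] /andP[R0 _].
have : d * c <= d * gk by rewrite ler_pM2l.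
have : 0 < d * c by rewrite mulr_gt0.
have : e * `|w + v| <= e * (d + d).
  by apply: ler_wpM2l => //; lra.
have : e * `|w - v| <= e * (d + d).
  by apply: ler_wpM2l => //; lra.
have : e * `|w| <= e * d.
  by apply: ler_wpM2l => //; lra.
nra.
Qed.
End H.
Arguments diff_rem {R n}.
Arguments dotpC {R n}.
Arguments dotpDl {R n}.
Arguments dotpZl {R n}.
Arguments dotpNl {R n}.
Arguments dotpBl {R n}.
Arguments dotpDr {R n}.
Arguments dotpZr {R n}.
Arguments dotpNr {R n}.
Arguments dotpBr {R n}.
Arguments dotp_ge0 {R n}.
Arguments enorm_sqr {R n}.
Arguments enorm_ge0 {R n}.
Arguments normv_sqr_le {R n}.
Arguments normv_le {R n}.
Arguments d_dotp {R n}.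
Arguments sc_convex {R n}.
Arguments grad_ineq {R n}.
Arguments step_decr {R n}.
Arguments sc_min {R n}.
Arguments key {R n}.

Theorem theorem1 (R : realType) (n : nat) (f : 'rV[R]_n -> R) (mu : R)
  (xstar : 'rV[R]_n) (xs : nat -> 'rV[R]_n) :
  (forall x, differentiable f x) ->
  0 < mu -> strongly_convex f mu ->
  (forall z, f xstar <= f z) ->
  ME_sequence f xs ->
  xs k @[k --> \oo] --> xstar.
Proof.
move=> df mu0 sc hmin hseq.
have mu0' : 0 <= mu := ltW mu0.
pose a := fun k => f (xs k).
have hstep k := step_decr _ _ _ _ mu0' sc (hseq k).2.
have adec : forall k, a k.+1 <= a k.
  move=> k; have [t [_ [_ H]]] := hstep k; apply: (le_trans H).
  rewrite lerBlDr lerDl; apply: mulr_ge0; first by rewrite divr_ge0.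
  by apply: mulr_ge0; [exact: sqr_ge0|exact: dotp_ge0].
have anoninc : nonincreasing_seq a by apply/nonincreasing_seqP.
have alb : has_lbound (range a) by exists (f xstar) => _ [k _ <-]; exact: hmin.
have acv : cvgn a := nonincreasing_is_cvgn anoninc alb.
set L := limn a in acv *.
have aL : forall k, L <= a k := nonincreasing_cvgn_ge anoninc acv.
have acv' : forall e, 0 < e -> \forall t \near \oo, `|L - a t| < e.
  by apply/cvgrPdist_lt.
have Lf : L <= f xstar.
  rewrite leNgt; apply/negP => Lgt.
  set c0 := L - f xstar.
  have c00 : 0 < c0 by rewrite subr_gt0.
  set B := 4 * (a 0%N - f xstar) / mu.
  have ak0 : forall k, a k <= a 0%N by move=> k; apply: anoninc.
  have B0 : 0 < B.
    rewrite /B divr_gt0 // mulr_gt0 // subr_gt0; exact: lt_le_trans Lgt (aL 0%N).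
  have hB : forall k, dotp (xs k - xstar) (xs k - xstar) <= B.
    move=> k; have := sc_min _ _ _ (xs k) sc hmin; have := ak0 k.
    rewrite /B /a; set D := dotp _ _ => h1 h2.
    rewrite ler_pdivlMr // mulrC; lra.
  have hG : forall k, c0 ^+ 2 / B <= dotp (grad f (xs k)) (grad f (xs k)).
    move=> k.
    have := grad_ineq _ _ _ (xstar - xs k) (df (xs k)) mu0' sc.
    rewrite [xs k + _]addrC subrK -opprB dotpNr.
    have := aL k; rewrite /a => h1 h2.
    set g := grad f (xs k) in h2 *.
    set w := xs k - xstar in h2 *.
    have hu : c0 <= dotp g w by rewrite /c0; lra.
    have hW := hB k; rewrite -/w in hW.
    set l := B / c0.
    have l0 : 0 < l by rewrite divr_gt0.
    clearbody w.
    have := dotp_ge0 (l *: g - w).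
    rewrite dotpBl !dotpBr !dotpZl !dotpZr (dotpC w g).
    set G := dotp g g; set u := dotp g w; set W := dotp w w => h3.
    have lc : l * c0 = B by rewrite /l mulfVK // gt_eqF.
    have lu : l * c0 <= l * u by rewrite ler_pM2l.
    have h4 : B <= l * (l * G) by move: hW; rewrite -/W; lra.
    have E : l * (l * G) = B * (B * G / c0 ^+ 2).
      by rewrite /l; field; rewrite gt_eqF.
    rewrite E in h4.
    have h5 : 1 <= B * G / c0 ^+ 2 by rewrite -(ler_pM2l B0) mulr1.
    rewrite ler_pdivlMr ?exprn_gt0 // mul1r in h5.
    by rewrite ler_pdivrMr // mulrC.
  set gam := Num.sqrt (c0 ^+ 2 / B).
  have gam0 : 0 < gam by rewrite sqrtr_gt0 divr_gt0 // exprn_gt0.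
  have hgam : forall k, gam <= enorm (grad f (xs k)).
    by move=> k; rewrite /enorm ler_sqrt ?dotp_ge0 ?hG.
  set M := B + 1.
  pose A := closed_ball_ Num.norm xstar M.
  have Acl : closed A by exact: closed_closed_ball_.
  have Abd : \forall M0 \near +oo, forall y, A y -> `|y| <= M0.
    near=> M0 => y Ay.
    apply: le_trans (_ : `|xstar| + M <= M0).
      have -> : y = xstar - (xstar - y) by rewrite opprB addrC subrK.
      by rewrite (le_trans (ler_normB _ _)) // lerD2l.
    near: M0; apply: nbhs_pinfty_ge; exact: num_real.
  have Acp := bounded_closed_compact Abd Acl.
  have inA : forall k, A (xs k).
    move=> k; rewrite /A /closed_ball_ /= -normrN opprB.
    have := normv_sqr_le (xs k - xstar); have := hB k; have := normr_ge0 (xs k - xstar).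
    rewrite /M; nra.
  have FA : \forall k \near \oo, A (xs k) by near=> k; exact: inA.
  have [p [Ap clp]] := Acp (xs @ \oo) _ FA.
  set e := gam / 12.
  have e0 : 0 < e by rewrite divr_gt0.
  have [r r0 Hr] := diff_rem _ _ (df p) _ e0.
  set d := r / 2.
  have d0 : 0 < d by rewrite divr_gt0.
  have q0 : 0 < mu / 8 * d ^+ 2 by rewrite mulr_gt0 ?divr_gt0 ?exprn_gt0.
  have [N _ HN] := acv' _ q0.
  have : [set y | exists2 k, (N <= k)%N & y = xs k] `&` ball p d !=set0.
    apply: clp; last exact: nbhsx_ballx.
    by exists N => // k /= Nk; exists k.
  move=> [_ [[k Nk ->] pk]].
  rewrite -ball_normE /= in pk.
  have [t [t0 [fy hdec]]] := hstep k.
  have HNk := HN k Nk; rewrite /= ltr_norml in HNk; move/andP: HNk => [HNk _].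
  apply: (key f mu p (xs k) t e r d gam mu0' sc d0 gam0 (ltW e0) (df (xs k)) Hr _ _ _ t0 fy _ (hgam k)).
  - rewrite /d; lra.
  - have : 12 * e = gam by rewrite /e; field.
    lra.
  - by rewrite distrC.
  - have := aL k.+1; rewrite /a => h1.
    rewrite /a in HNk.
    have := enorm_ge0 (grad f (xs k)).
    have := enorm_sqr (grad f (xs k)).
    set E := enorm _; set G := dotp _ _ => h2 h3.
    have h4 : mu / 8 * (t ^+ 2 * G) < mu / 8 * d ^+ 2 by move: hdec; rewrite -/G; lra.
    have h5 : t ^+ 2 * G < d ^+ 2 by rewrite -(ltr_pM2l (_ : 0 < mu / 8)) // divr_gt0.
    have h6 : 0 <= t * E by rewrite mulr_ge0 // ltW.
    rewrite -h2 in h5; nra.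
apply/cvgrPdist_le => eps eps0.
have q0 : 0 < mu * eps ^+ 2 / 4 by rewrite divr_gt0 // mulr_gt0 // exprn_gt0.
near=> k.
have Hk : `|L - a k| < mu * eps ^+ 2 / 4 by near: k; exact: acv'.
move: Hk; rewrite ltr_norml => /andP[Hk _].
have := sc_min _ _ _ (xs k) sc hmin.
have := normv_sqr_le (xs k - xstar); rewrite distrC.
have := aL k; have := hmin (xs k); have := normr_ge0 (xstar - xs k).
rewrite /a in Hk *.
set D := dotp _ _ => n0 h1 h2 h3 h4.
have HD : mu * D < mu * eps ^+ 2 by lra.
have HD' : D < eps ^+ 2 by rewrite -(ltr_pM2l mu0).
nra.
Unshelve. all: by end_near.
Qed.
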